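(* Let $U\subseteq\mathrm{Homeo}^+(\mathbb{R})$ and let $\mathcal{F}$ be a family such that: (1) $\mathcal{F}$ is a countable set of partial injective functions from $\mathbb{R}$ to $\mathbb{R}$; (2) for every $(x,y)\in\mathbb{R}^2$ there is $\varphi\in U$ with $\varphi(x)=y$ such that for every $z\neq x$ there is some $f\in\mathcal{F}$ (with $z\in\mathrm{dom}(f)$) satisfying $\varphi(z)=f(z)$. Let $\sim$ be the equivalence relation on $\mathbb{R}$ generated by $R:=\{(u,v): \exists f\in\mathcal{F}\ f(u)=v\}$. Then there is no good $U$-anonymous weak $\mathbb{R}/\sim$-predictor.
   Context: $\mathrm{Homeo}^+(\mathbb{R})$ is the group of increasing homeomorphisms of $\mathbb{R}$. For a set $S$, a weak $S$-predictor is a function $\mathcal{P}$ from the set of $S$-valued functions $f$ with domain $\mathbb{R}\setminus\{h_f\}$ for some $h_f\in\mathbb{R}$ into $S$. It is good if for every $F:\mathbb{R}\to S$ the set $\{x:\mathcal{P}(F|_{\mathbb{R}\setminus\{x\}})\neq F(x)\}$ has Lebesgue measure zero. It is $U$-anonymous if whenever $f,g$ are such functions with holes $h_f,h_g$, $\varphi\in U$, $\varphi(h_f)=h_g$, and $f=(g\circ\varphi)|_{\mathbb{R}\setminus\{h_f\}}$, then $\mathcal{P}(f)=\mathcal{P}(g)$. *)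

(* Defs.v *)
From HB Require Import structures.
From mathcomp Require Import all_boot all_order all_algebra.
From mathcomp Require Import all_classical all_reals all_analysis.
From Stdlib Require Import Relations.
Set Implicit Arguments. Unset Strict Implicit. Unset Printing Implicit Defensive.
Import Order.TTheory GRing.Theory Num.Theory numFieldNormedType.Exports.
Local Open Scope classical_set_scope.
Local Open Scope ring_scope.

(* Homeo^+(R): increasing homeomorphisms of R
   (continuous, strictly increasing bijections; the inverse is then
   automatically continuous, but we also require it explicitly). *)
Definition homeo_plus (R : realType) (phi : R -> R) : Prop :=
  continuous phi /\ (forall x y : R, x < y -> phi x < phi y) /\
  exists psi : R -> R, cancel phi psi /\ cancel psi phi /\ continuous psi.

(* Partial functions R -> R are encoded as R -> option R
   (dom f = [set x | f x <> None]); this encoding is exact (no junk). *)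
Definition partial_injective (R : realType) (f : R -> option R) : Prop :=
  forall u v w : R, f u = Some w -> f v = Some w -> u = v.

Definition relF (R : realType) (F : set (R -> option R)) : R -> R -> Prop :=
  fun u v => exists2 f, F f & f u = Some v.

Definition simF (R : realType) (F : set (R -> option R)) : R -> R -> Prop :=
  clos_refl_sym_trans R (relF F).

Definition quotF (R : realType) (F : set (R -> option R)) : Type :=
  {A : set R | exists x : R, A = [set y | simF F x y]}.

(* S-valued functions with domain R \ {h} for some h: pairs (h, f). *)
Definition holed (R : realType) (S : Type) : Type :=
  {h : R & {x : R | x <> h} -> S}.

Definition weak_predictor (R : realType) (S : Type) : Type := holed R S -> S.

Definition restrict (R : realType) (S : Type) (F : R -> S) (x : R) : holed R S :=
  existT (fun h => {z : R | z <> h} -> S) x (fun z => F (sval z)).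

Definition good_predictor (R : realType) (S : Type) (P : weak_predictor R S) :=
  forall F : R -> S,
    (@lebesgue_measure R).-negligible [set x | P (restrict F x) <> F x].

Definition anonymous (R : realType) (S : Type) (U : set (R -> R))
  (P : weak_predictor R S) : Prop :=
  forall (hf hg : R) (f : {x : R | x <> hf} -> S) (g : {x : R | x <> hg} -> S)
         (phi : R -> R),
    U phi -> phi hf = hg ->
    (forall (z : R) (hz : z <> hf) (hz' : phi z <> hg),
        f (exist _ z hz) = g (exist _ (phi z) hz')) ->
    P (existT _ hf f) = P (existT _ hg g).

(* Main.v *)
Require Import Defs.
From HB Require Import structures.
From mathcomp Require Import all_boot all_order all_algebra.
From mathcomp Require Import all_classical all_reals all_analysis.
From Stdlib Require Import Relations.
Set Implicit Arguments. Unset Strict Implicit.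
Import Order.TTheory GRing.Theory Num.Theory numFieldNormedType.Exports.
Local Open Scope classical_set_scope.
Local Open Scope ring_scope.

Definition inv_step (R : realType) (g : R -> option R) (x : R) : option R :=
  match pselect (exists v, g v = Some x) with
  | left h => Some (projT1 (cid h)) | right _ => None end.

Definition step (R : realType) (e : nat -> R -> option R) (nb : nat * bool) (x : R) :=
  if nb.2 then e nb.1 x else inv_step (e nb.1) x.

Fixpoint walk (R : realType) (e : nat -> R -> option R) (x : R)
  (s : seq (nat * bool)) : option R :=
  match s with
  | [::] => Some x
  | nb :: s' => match step e nb x with Some y => walk e y s' | None => None end
  end.

Lemma walk_cat (R : realType) (e : nat -> R -> option R) s t x :
  walk e x (s ++ t) = obind (fun y => walk e y t) (walk e x s).
Proof.
elim: s x => [//|nb s IH] x /=.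
by case: (step e nb x) => [y|//]; rewrite IH.
Qed.

Definition flipnb (nb : nat * bool) := (nb.1, ~~ nb.2).

Lemma step_sym (R : realType) (e : nat -> R -> option R) nb x y :
  (forall n, partial_injective (e n)) ->
  step e nb x = Some y -> step e (flipnb nb) y = Some x.
Proof.
move=> He; case: nb => n [|] /=; rewrite /step /=.
- move=> exy; rewrite /inv_step; case: pselect => [h|hn]; last first.
    by exfalso; apply: hn; exists x.
  by case: (cid h) => v /= hv; congr Some; exact: (He n v x y).
- rewrite /inv_step; case: pselect => [h|//] [<-].
  by case: (cid h).
Qed.

Lemma walk_rev (R : realType) (e : nat -> R -> option R) s x y :
  (forall n, partial_injective (e n)) ->
  walk e x s = Some y -> walk e y (rev (map flipnb s)) = Some x.
Proof.
move=> He; elim: s x => [|nb s IH] x /=; first by case=> ->.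
case E: (step e nb x) => [z|//] wz.
rewrite rev_cons -cats1 walk_cat (IH _ wz) /=.
by rewrite (step_sym He E).
Qed.

Lemma sim_walk (R : realType) (F : set (R -> option R)) (e : nat -> R -> option R) x y :
  (forall n, partial_injective (e n)) ->
  (forall g, F g -> exists n, e n = g) ->
  simF F x y -> exists s, walk e x s = Some y.
Proof.
move=> He Hs H; elim: H.
- move=> u v [g Fg guv]; have [n en] := Hs g Fg.
  by exists [:: (n, true)]; rewrite /= /step /= en guv.
- by move=> u; exists [::].
- by move=> u v _ [s hs]; exists (rev (map flipnb s)); exact: walk_rev.
- move=> u v w _ [s hs] _ [t ht]; exists (s ++ t).
  by rewrite walk_cat hs.
Qed.

Lemma class_countable (R : realType) (F : set (R -> option R)) (x : R) :
  countable F -> (forall f, F f -> partial_injective f) ->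
  countable [set y | simF F x y].
Proof.
move=> /countable_injP [c cinj] Hinj.
pose e n : R -> option R := match pselect (exists g, F g /\ c g = n) with
  | left h => projT1 (cid h) | right _ => fun _ => None end.
have He n : partial_injective (e n).
  rewrite /e; case: pselect => [h|_]; last by move=> ? ? ?.
  by have [Fg _] := projT2 (cid h); exact: Hinj.
have Hs g : F g -> exists n, e n = g.
  move=> Fg; exists (c g); rewrite /e; case: pselect => [h|hn]; last first.
    by exfalso; apply: hn; exists g.
  have [Fg' cg] := projT2 (cid h); apply: cinj; rewrite ?inE //.
apply: (@sub_countable _ _ _ ((fun s => odflt x (walk e x s)) @` [set: seq (nat * bool)])).
  apply: subset_card_le => y /= /(sim_walk He Hs) [s hs].
  by exists s => //; rewrite hs.
apply: card_le_trans (card_image_le _ _) _; exact: countableP.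
Qed.

Theorem corollary5p3 (R : realType) (U : set (R -> R)) (F : set (R -> option R)) :
  (forall phi, U phi -> homeo_plus phi) ->
  countable F ->
  (forall f, F f -> partial_injective f) ->
  (forall x y : R, exists phi, [/\ U phi, phi x = y &
      forall z, z <> x -> exists2 f, F f & f z = Some (phi z)]) ->
  ~ exists P : weak_predictor R (quotF F), good_predictor P /\ anonymous U P.
Proof.
move=> _ cF Finj HU [P [Pgood Panon]].
pose G (x : R) : quotF F := exist _ [set y | simF F x y] (ex_intro _ x erefl).
have eqv := @clos_rst_is_equiv R (relF F).
have GE x y : simF F x y -> G x = G y.
  move=> sxy; apply: eq_exist; apply/funext => z; apply/propext; split => /=.
  - by move=> sxz; apply: (equiv_trans _ _ eqv) (equiv_sym _ _ eqv _ _ sxy) sxz.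
  - by move=> syz; apply: (equiv_trans _ _ eqv) sxy syz.
have Pc x : P (Defs.restrict G x) = P (Defs.restrict G 0).
  have [phi [Uphi phix Hphi]] := HU x 0.
  apply: (Panon _ _ _ _ phi Uphi phix) => z hz hz' /=.
  apply: GE; have [f Ff fz] := Hphi z hz.
  by apply: rst_step; exists f.
set c := P (Defs.restrict G 0).
have [x0 hx0] := proj2_sig c.
have cl := class_countable x0 cF Finj.
have N1 := Pgood G.
have N2 : (@lebesgue_measure R).-negligible [set y | simF F x0 y].
  apply/negligibleP; first exact: countable_measurable.
  exact: countable_lebesgue_measure0.
have N3 := negligibleU N1 N2.
have N4 : (@lebesgue_measure R).-negligible [set` `[0%R, 1%R]].
  apply: negligibleS N3 => y _ /=.
  case: (pselect (simF F x0 y)) => [h|h]; [by right|left].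
  rewrite Pc -/c => E.
  apply: h; have := congr1 sval E; rewrite hx0 /= => eq.
  have : [set z | simF F y z] y by exact: (equiv_refl _ _ eqv).
  by rewrite -eq.
have : (@lebesgue_measure R) ([set` `[0%R, 1%R]] : set R) = 0%E.
  by apply: measure_negligible N4; exact: measurable_itv.
rewrite lebesgue_measure_itv /= lte_fin ltr01 oppr0 adde0.
by move=> /eqP; rewrite eqe oner_eq0.
Qed.
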